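(* Let $f$ be an $(n-1)$-variable Boolean function and let $\bar f$ be the $n$-variable Boolean function $\bar f(x_1,\dots,x_n)=x_n+f(x_1,\dots,x_{n-1})$. Then $$\mathcal{FAI}(f)\le\mathcal{FAI}(\bar f)\le\mathcal{FAI}(f)+2.$$
   Context: An $m$-variable Boolean function is a map $\mathbb{F}_2^m\to\mathbb{F}_2$, with algebraic degree $\deg$ the degree of its algebraic normal form. For $h$ an $m$-variable function, ${AN}^c(h)$ is the set of $g$ with $h\cdot g\neq0$, ${FAI}(h)$ is the minimum of $\deg(g)+\deg(h\cdot g)$ over $g\in{AN}^c(h)$, $g\neq 1$, and $\mathcal{FAI}(h)=\min({FAI}(h),{FAI}(1+h))$. *)

(* Defs.v *)
From mathcomp Require Import all_boot.
Set Implicit Arguments. Unset Strict Implicit. Unset Printing Implicit Defensive.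

(* Points of F_2^m: boolean vectors indexed by 'I_m (coordinate i = x_{i+1}). *)
Definition vec (m : nat) := {ffun 'I_m -> bool}.
Definition bfun (m : nat) := {ffun vec m -> bool}.

Section BF.
Variable m : nat.

Definition bf_zero : bfun m := [ffun _ => false].
Definition bf_one  : bfun m := [ffun _ => true].
Definition bf_add (f g : bfun m) : bfun m := [ffun x => xorb (f x) (g x)].
Definition bf_mul (f g : bfun m) : bfun m := [ffun x => f x && g x].

Definition vle (x u : vec m) : bool := [forall i, x i ==> u i].
Definition wt (u : vec m) : nat := #|[set i | u i]|.

(* ANF coefficient of the monomial prod_{i : u i} x_i (binary Moebius transform) *)
Definition anf (f : bfun m) (u : vec m) : bool :=
  \big[xorb/false]_(x | vle x u) f x.

(* algebraic degree = max weight of a monomial in the ANF (0 for the zero function) *)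
Definition deg (f : bfun m) : nat := \max_(u | anf f u) wt u.

(* Minima over possibly empty families, in nat extended by +oo (= None). *)
Definition omin : option nat -> option nat -> option nat := oAC minnA minnC.

Definition FAI (h : bfun m) : option nat :=
  \big[omin/None]_(g | (bf_mul h g != bf_zero) && (g != bf_one))
     Some (deg g + deg (bf_mul h g)).

Definition FAIcal (h : bfun m) : option nat := omin (FAI h) (FAI (bf_add bf_one h)).
End BF.

Definition ole (a b : option nat) : bool :=
  match a, b with
  | _, None => true
  | None, Some _ => false
  | Some x, Some y => x <= y
  end.

Definition oadd (k : nat) (a : option nat) : option nat := omap (addn k) a.

Definition extend (m : nat) (f : bfun m) : bfun m.+1 :=
  [ffun x : vec m.+1 =>
     xorb (x ord_max) (f [ffun i : 'I_m => x (widen_ord (leqnSn m) i)])].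

(* Main.v *)
Require Import Defs.
From mathcomp Require Import all_boot zify.
Set Implicit Arguments. Unset Strict Implicit. Unset Printing Implicit Defensive.

Lemma xorE (I : finType) (P : pred I) (F : I -> bool) :
  \big[xorb/false]_(i | P i) F i = \big[addb/false]_(i | P i) F i.
Proof.
rewrite unlock /=; elim: (index_enum I) => //= x r ->.
by case: (P x) => //; case: (F x); case: (reducebig _ _ _).
Qed.

Lemma anfE m (h : bfun m) u : anf h u = \big[addb/false]_(x | vle x u) h x.
Proof. exact: xorE. Qed.

Lemma anf_add m (f g : bfun m) u : anf (bf_add f g) u = anf f u (+) anf g u.
Proof. by rewrite !anfE -big_split /=; apply: eq_bigr => x _; rewrite ffunE; case: (f x); case: (g x). Qed.

Lemma anf0 m u : anf (bf_zero m) u = false.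
Proof. by rewrite anfE big1 // => x _; rewrite ffunE. Qed.

Section Split.
Variable n : nat.
Definition low (x : vec n.+1) : vec n := [ffun i => x (widen_ord (leqnSn n) i)].
Definition join (y : vec n) (b : bool) : vec n.+1 :=
  [ffun i : 'I_n.+1 => if unlift ord_max i is Some j then y j else b].
Definition res (F : bfun n.+1) b : bfun n := [ffun y => F (join y b)].

Lemma widen_lift (i : 'I_n) : widen_ord (leqnSn n) i = lift ord_max i.
Proof. by apply: val_inj; rewrite /= /bump leqNgt ltn_ord. Qed.

Lemma join_max y b : join y b ord_max = b.
Proof. by rewrite ffunE unlift_none. Qed.

Lemma low_join y b : low (join y b) = y.
Proof. by apply/ffunP => i; rewrite !ffunE widen_lift liftK. Qed.

Lemma join_low x : join (low x) (x ord_max) = x.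
Proof.
apply/ffunP => i; rewrite ffunE; case: unliftP => [j ->|->] //.
by rewrite ffunE widen_lift.
Qed.

Lemma vle_split x u : vle x u = vle (low x) (low u) && (x ord_max ==> u ord_max).
Proof.
apply/forallP/andP => [H|[/forallP H1 H2] i].
  by split; [apply/forallP => i; rewrite !ffunE; exact: H | exact: H].
case: (unliftP ord_max i) => [j ->|->] //; have := H1 j; by rewrite !ffunE widen_lift.
Qed.

Lemma wt_sum m (u : vec m) : wt u = \sum_(i < m) u i.
Proof.
rewrite /wt -sum1_card big_mkcond /=; apply: eq_bigr => i _.
by rewrite inE; case: (u i).
Qed.

Lemma wt_split x : wt x = wt (low x) + x ord_max.
Proof.
by rewrite !wt_sum big_ord_recr /=; congr (_ + _); apply: eq_bigr => i _; rewrite ffunE.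
Qed.

Lemma wt_join y b : wt (join y b) = wt y + b.
Proof. by rewrite wt_split low_join join_max. Qed.

Lemma anf_split (F : bfun n.+1) u :
  anf F u = if u ord_max then anf (res F false) (low u) (+) anf (res F true) (low u)
            else anf (res F false) (low u).
Proof.
rewrite !anfE (reindex (fun p : bool * vec n => join p.2 p.1)) /=; last first.
  by exists (fun x : vec n.+1 => (x ord_max, low x)) => [[b y]|x] _; rewrite ?join_max ?low_join ?join_low.
rewrite -(pair_big_dep xpredT (fun b y => vle (join y b) u) (fun b y => F (join y b))) /=.
rewrite big_bool /=.
under eq_bigl => y do rewrite vle_split low_join join_max.
under [X in _ (+) X]eq_bigl => y do rewrite vle_split low_join join_max.
case: (u ord_max) => /=.
  rewrite addbC; congr (_ (+) _); apply: eq_big => y; rewrite ?andbT // => _; by rewrite ffunE.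
rewrite [X in X (+) _]big1 /=; last by move=> y; rewrite andbF.
by apply: eq_big => y; rewrite ?andbT // => _; rewrite ffunE.
Qed.

End Split.

Lemma deg_ge m (h : bfun m) u : anf h u -> wt u <= deg h.
Proof. by move=> H; rewrite /deg (bigD1 u) //= leq_maxl. Qed.

Lemma deg_leP m (h : bfun m) d : (forall u, anf h u -> wt u <= d) -> deg h <= d.
Proof. by move=> H; apply/bigmax_leqP => u /H. Qed.

Section S2.
Variable n : nat.

Lemma anf_join (F : bfun n.+1) y b :
  anf F (join y b) = if b then anf (res F false) y (+) anf (res F true) y
                     else anf (res F false) y.
Proof. by rewrite anf_split join_max low_join. Qed.

Lemma res_eq (F F' : bfun n.+1) : res F false = res F' false -> res F true = res F' true -> F = F'.
Proof.
move=> /ffunP E0 /ffunP E1; apply/ffunP => x; rewrite -(join_low x).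
by case: (x ord_max); [have := E1 (low x) | have := E0 (low x)]; rewrite !ffunE.
Qed.

Lemma res_zero b : res (bf_zero n.+1) b = bf_zero n.
Proof. by apply/ffunP => y; rewrite !ffunE. Qed.
Lemma res_one b : res (bf_one n.+1) b = bf_one n.
Proof. by apply/ffunP => y; rewrite !ffunE. Qed.
Lemma res_mul (F G : bfun n.+1) b : res (bf_mul F G) b = bf_mul (res F b) (res G b).
Proof. by apply/ffunP => y; rewrite !ffunE. Qed.

Lemma degR0 (F : bfun n.+1) : deg (res F false) <= deg F.
Proof.
apply: deg_leP => u H; have := deg_ge (h := F) (u := join u false).
by rewrite anf_join wt_join addn0; apply.
Qed.

Lemma degR1 (F : bfun n.+1) : deg (res F true) <= deg F.
Proof.
apply: deg_leP => u H; case E: (anf (res F false) u).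
  have := deg_ge (h := F) (u := join u false).
  by rewrite anf_join wt_join addn0; apply.
have := deg_ge (h := F) (u := join u true).
rewrite anf_join wt_join E H /= => /(_ isT); lia.
Qed.

Lemma deg_build (F : bfun n.+1) d :
  (forall u, anf (res F false) u -> wt u <= d) ->
  (forall u, anf (res F false) u (+) anf (res F true) u -> (wt u).+1 <= d) -> deg F <= d.
Proof.
move=> H0 H1; apply: deg_leP => u; rewrite -(join_low u) anf_join wt_join.
case: (u ord_max) => [/H1|/H0]; lia.
Qed.

Lemma deg_top (F : bfun n.+1) u :
  anf (res F false) u (+) anf (res F true) u -> (wt u).+1 <= deg F.
Proof. by move=> H; have := deg_ge (h := F) (u := join u true); rewrite anf_join wt_join H addn1; apply. Qed.

Lemma deg_lift (F : bfun n.+1) : res F true = bf_zero n -> deg F <= (deg (res F false)).+1.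
Proof.
move=> E; apply: deg_build => u; [move/deg_ge; lia | rewrite E anf0 addbF => /deg_ge; lia].
Qed.

End S2.

Lemma vec0 (x y : vec 0) : x = y.
Proof. by apply/ffunP => -[]. Qed.

Lemma anf_zero n (h : bfun n) : (forall u, anf h u = false) -> h = bf_zero n.
Proof.
elim: n h => [|n IH] h H.
  apply/ffunP => x; rewrite ffunE -(H x) anfE (big_pred1 x) // => y.
  rewrite (vec0 y x) [pred1 _ _]/= eqxx; by apply/forallP => -[].
have E0 : res h false = bf_zero n by apply: IH => u; have := H (join u false); rewrite anf_join.
have E1 : res h true = bf_zero n.
  by apply: IH => u; have := H (join u true); rewrite anf_join E0 anf0.
by apply: res_eq; rewrite ?res_zero.
Qed.

Lemma anf_nz n (h : bfun n) : h != bf_zero n -> exists u, anf h u.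
Proof.
move=> Hn; apply/existsP; apply: contraR Hn => /existsPn H; apply/eqP/anf_zero => u.
exact/negbTE/H.
Qed.

Lemma anf_one n u : anf (bf_one n) u -> wt u = 0.
Proof.
elim: n u => [|n IH] u; first by rewrite wt_sum big_ord0.
rewrite anf_split !res_one wt_split; case: (u ord_max); first by rewrite addbb.
by move/IH => ->.
Qed.

Lemma zero_one m : bf_zero m != bf_one m.
Proof. by apply/eqP => /ffunP /(_ [ffun=> false]); rewrite !ffunE. Qed.

Lemma ominE (a b : option nat) : oAC minnA minnC a b =
  match a, b with Some x, Some y => Some (minn x y) | Some x, None => Some x | None, _ => b end.
Proof. by case: a; case: b. Qed.

Lemma FAI_le m (h g : bfun m) : bf_mul h g != bf_zero m -> g != bf_one m ->
  ole (FAI h) (Some (deg g + deg (bf_mul h g))).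
Proof.
move=> H1 H2; rewrite /FAI (bigD1 g) /=; last by rewrite H1 H2.
rewrite ominE; case: (\big[_/_]_(_ | _) _) => [r|] //=; exact: geq_minl.
Qed.

Lemma FAI_ge m (h : bfun m) a :
  (forall g, bf_mul h g != bf_zero m -> g != bf_one m -> ole a (Some (deg g + deg (bf_mul h g)))) ->
  ole a (FAI h).
Proof.
move=> H; rewrite /FAI; apply: (big_ind (fun b => ole a b)) => [|x y|g /andP[]].
- by clear H; case: a.
- rewrite /omin ominE; case: a {H} => [a|]; case: x => [x|]; case: y => [y|] //=; by rewrite leq_min => ->->.
- exact: H.
Qed.

Lemma FAI_ge2 m (h : bfun m) a :
  (forall g, bf_mul h g != bf_zero m -> g != bf_one m -> ole a (Some (deg g + deg (bf_mul h g) + 2))) ->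
  ole a (oadd 2 (FAI h)).
Proof.
move=> H; rewrite /FAI; elim/big_ind: _ => [|x y|g /andP[] H1 H2].
- by clear H; case: a.
- rewrite /omin ominE; case: a H => [a|] H; case: x => [x|]; case: y => [y|] //=.
  by move=> ? ?; lia.
- by have := H g H1 H2; case: a {H} H1 H2 => //= a; rewrite addnC.
Qed.

Lemma ole_trans a x y : ole a (Some x) -> x <= y -> ole a (Some y).
Proof. by case: a => //= a; apply: leq_trans. Qed.
Lemma ole_ominl a b c : ole a c -> ole (omin a b) c.
Proof. by rewrite /omin ominE; case: a; case: b; case: c => //= *; apply: leq_trans (geq_minl _ _) _. Qed.
Lemma ole_ominr a b c : ole b c -> ole (omin a b) c.
Proof. by rewrite /omin ominE; case: a; case: b; case: c => //= *; apply: leq_trans (geq_minr _ _) _. Qed.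

Lemma extendE m (f : bfun m) x : extend f x = xorb (x ord_max) (f (low x)).
Proof. by rewrite ffunE. Qed.

(* affine witness *)
Lemma Aff k (h : bfun k.+1) : h != bf_zero _ -> ole (FAI h) (Some (deg h + 2)).
Proof.
move=> hnz.
have [E0|N0] := eqVneq (res h false) (bf_zero k).
  have N1 : res h true != bf_zero k.
    by apply: contra hnz => /eqP E1; apply/eqP/res_eq; rewrite ?res_zero.
  pose g : bfun k.+1 := [ffun x : vec k.+1 => x ord_max].
  have g0 : res g false = bf_zero k by apply/ffunP => y; rewrite !ffunE ?unlift_none.
  have g1 : res g true = bf_one k by apply/ffunP => y; rewrite !ffunE ?unlift_none.
  apply: (@ole_trans _ (deg g + deg (bf_mul h g))).
    apply: FAI_le.
      by apply: contra N1 => /eqP E; rewrite -[res h true]/(res h true) ; apply/eqP/ffunP => y;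
        have := congr1 (fun F => res F true y) E; rewrite !ffunE ?unlift_none andbT.
    by apply: contra (zero_one k) => /eqP E; rewrite -g0 E res_one.
  have dg : deg g <= 1.
    apply: deg_build => u; rewrite g0 anf0 // g1 /= => /anf_one ->; done.
  have dhg : deg (bf_mul h g) <= (deg h).+1.
    apply: deg_build => u; rewrite res_mul g0.
      have -> : bf_mul (res h false) (bf_zero k) = bf_zero k by apply/ffunP => y; rewrite !ffunE andbF.
      by rewrite anf0.
    have -> : bf_mul (res h false) (bf_zero k) = bf_zero k by apply/ffunP => y; rewrite !ffunE andbF.
    rewrite anf0 /= res_mul g1.
    have -> : bf_mul (res h true) (bf_one k) = res h true by apply/ffunP => y; rewrite !ffunE andbT.
    move/deg_ge => H; have := degR1 h; lia.
  lia.
pose g : bfun k.+1 := [ffun x : vec k.+1 => ~~ x ord_max].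
have g0 : res g false = bf_one k by apply/ffunP => y; rewrite !ffunE ?unlift_none.
have g1 : res g true = bf_zero k by apply/ffunP => y; rewrite !ffunE ?unlift_none.
apply: (@ole_trans _ (deg g + deg (bf_mul h g))).
  apply: FAI_le.
    apply: contra N0 => /eqP E; apply/eqP/ffunP => y.
    by have := congr1 (fun F => res F false y) E; rewrite !ffunE ?unlift_none andbT.
  by apply: contra (zero_one k) => /eqP E; rewrite -g1 E res_one.
have dg : deg g <= 1.
  apply: leq_trans (deg_lift _) _; first by rewrite g1.
  by rewrite g0 ltnS; apply: deg_leP => u /anf_one ->.
have dhg : deg (bf_mul h g) <= (deg h).+1.
  apply: leq_trans (deg_lift _) _.
    by rewrite res_mul g1; apply/ffunP => y; rewrite !ffunE andbF.
  rewrite res_mul g0 ltnS.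
  have -> : bf_mul (res h false) (bf_one k) = res h false by apply/ffunP => y; rewrite !ffunE andbT.
  exact: degR0.
lia.
Qed.

Lemma res_ext0 m (f : bfun m) : res (extend f) false = f.
Proof. by apply/ffunP => y; rewrite /res ffunE extendE join_max low_join. Qed.
Lemma res_ext1 m (f : bfun m) : res (extend f) true = bf_add (bf_one m) f.
Proof. by apply/ffunP => y; rewrite /res [LHS]ffunE extendE join_max low_join !ffunE. Qed.

Lemma upper m (f : bfun m) : ole (FAI (extend f)) (oadd 2 (FAI f)).
Proof.
apply: FAI_ge2 => g H1 H2.
pose G : bfun m.+1 := [ffun x : vec m.+1 => ~~ x ord_max && g (low x)].
have G0 : res G false = g by apply/ffunP => y; rewrite /res ffunE [G _]ffunE join_max low_join.
have G1 : res G true = bf_zero m by apply/ffunP => y; rewrite /res ffunE [G _]ffunE join_max !ffunE.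
have HH0 : res (bf_mul (extend f) G) false = bf_mul f g by rewrite res_mul G0 res_ext0.
have HH1 : res (bf_mul (extend f) G) true = bf_zero m.
  by rewrite res_mul G1; apply/ffunP => y; rewrite !ffunE andbF.
apply: (@ole_trans _ (deg G + deg (bf_mul (extend f) G))).
  apply: FAI_le.
    by apply: contra H1 => /eqP E; rewrite -HH0 E res_zero.
  by apply: contra (zero_one m) => /eqP E; rewrite -G1 E res_one.
have := deg_lift HH1; have := deg_lift G1; rewrite HH0 G0; lia.
Qed.

Lemma keydeg n (G H : bfun n.+1) :
  bf_add (res G false) (res G true) != bf_zero n ->
  bf_add (res H false) (res H true) != bf_zero n ->
  deg (bf_add (res H false) (res H true)) + 2 <= deg G + deg H.
Proof.
move=> /anf_nz [u Hu] /anf_nz [v Hv].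
have dG := deg_top (F := G) (u := u); rewrite -anf_add Hu in dG.
have dH := deg_top (F := H) (u := v); rewrite -anf_add Hv in dH.
have dH' : deg (bf_add (res H false) (res H true)) <= (deg H).-1.
  apply: deg_leP => w Hw; have := deg_top (F := H) (u := w); rewrite -anf_add Hw; move/(_ isT); lia.
have := dG isT; have := dH isT; lia.
Qed.

Lemma lower k (f : bfun k.+1) : ole (FAIcal f) (FAI (extend f)).
Proof.
apply: FAI_ge => G HN GN.
set H := bf_mul (extend f) G.
have E0 : res H false = bf_mul f (res G false) by rewrite res_mul res_ext0.
have E1 : res H true = bf_mul (bf_add (bf_one _) f) (res G true) by rewrite res_mul res_ext1.
have dG0 := degR0 G; have dG1 := degR1 G; have dH0 := degR0 H; have dH1 := degR1 H.
case A: ((res H false != bf_zero _) && (res G false != bf_one _)).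
  case/andP: A => A1 A2; apply: ole_ominl; apply: ole_trans (@FAI_le _ f (res G false) _ _) _.
  - by rewrite -E0.
  - exact: A2.
  rewrite -E0; lia.
case B: ((res H true != bf_zero _) && (res G true != bf_one _)).
  case/andP: B => B1 B2; apply: ole_ominr; apply: ole_trans (@FAI_le _ (bf_add (bf_one _) f) (res G true) _ _) _.
  - by rewrite -E1.
  - exact: B2.
  rewrite -E1; lia.
have GN' : ~~ ((res G false == bf_one _) && (res G true == bf_one _)).
  by apply: contra GN => /andP[/eqP a /eqP b]; apply/eqP/res_eq; rewrite ?res_one.
have HN' : (res H false != bf_zero _) || (res H true != bf_zero _).
  apply: contraR HN; rewrite negb_or !negbK => /andP[/eqP a /eqP b].
  by apply/eqP/res_eq; rewrite ?res_zero.
have addz (a : bfun k.+1) : bf_add a (bf_zero _) = a by apply/ffunP => y; rewrite !ffunE; case: (a y).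
have zadd (a : bfun k.+1) : bf_add (bf_zero _) a = a by apply/ffunP => y; rewrite !ffunE; case: (a y).
have mul1 (a : bfun k.+1) : bf_mul a (bf_one _) = a by apply/ffunP => y; rewrite !ffunE andbT.
have nz1 (a : bfun k.+1) : a != bf_one _ -> bf_add (bf_one _) a != bf_zero _.
  apply: contra => /eqP /ffunP E; apply/eqP/ffunP => y; have := E y; rewrite !ffunE.
  by case: (a y).
have nz2 (a : bfun k.+1) : a != bf_one _ -> bf_add a (bf_one _) != bf_zero _.
  apply: contra => /eqP /ffunP E; apply/eqP/ffunP => y; have := E y; rewrite !ffunE.
  by case: (a y).
case/orP: HN' => HN'.
- move: A; rewrite HN' /= => /negbFE /eqP G0.
  have G1 : res G true != bf_one _ by move: GN'; rewrite G0 eqxx.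
  move: B; rewrite G1 andbT => /negbFE /eqP H1.
  have Hf : bf_add (res H false) (res H true) = f by rewrite H1 addz E0 G0 mul1.
  have := keydeg (G := G) (H := H); rewrite Hf G0 => /(_ (nz1 _ G1)).
  have fnz : f != bf_zero _ by rewrite -Hf H1 addz.
  rewrite fnz => /(_ isT) D; apply: ole_ominl; apply: ole_trans (Aff fnz) _; lia.
- move: B; rewrite HN' /= => /negbFE /eqP G1.
  have G0 : res G false != bf_one _ by move: GN'; rewrite G1 eqxx andbT.
  move: A; rewrite G0 andbT => /negbFE /eqP H0.
  have Hf : bf_add (res H false) (res H true) = bf_add (bf_one _) f by rewrite H0 zadd E1 G1 mul1.
  have := keydeg (G := G) (H := H); rewrite Hf G1 => /(_ (nz2 _ G0)).
  have fnz : bf_add (bf_one _) f != bf_zero _ by rewrite -Hf H0 zadd.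
  rewrite fnz => /(_ isT) D; apply: ole_ominr; apply: ole_trans (Aff fnz) _; lia.
Qed.

Lemma ext_neg m (f : bfun m) : extend (bf_add (bf_one m) f) = bf_add (bf_one m.+1) (extend f).
Proof. by apply/ffunP => x; rewrite !ffunE; case: (x ord_max); case: (f _). Qed.

Lemma negneg m (f : bfun m) : bf_add (bf_one m) (bf_add (bf_one m) f) = f.
Proof. by apply/ffunP => x; rewrite !ffunE; case: (f x). Qed.

Lemma FAIcal_neg m (f : bfun m) : FAIcal (bf_add (bf_one m) f) = FAIcal f.
Proof. by rewrite /FAIcal negneg /omin !ominE; case: (FAI f); case: (FAI _) => //= *; rewrite minnC. Qed.

Lemma ole_omin2 a x y : ole a x -> ole a y -> ole a (omin x y).
Proof. by rewrite /omin ominE; case: a => [a|]; case: x => [x|]; case: y => [y|] //=; rewrite leq_min => ->->. Qed.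

Theorem corollary3 (m : nat) (hm : 0 < m) (f : bfun m) :
  ole (FAIcal f) (FAIcal (extend f)) &&
  ole (FAIcal (extend f)) (oadd 2 (FAIcal f)).
Proof.
case: m hm f => [//|k] _ f; apply/andP; split.
  rewrite {2}/FAIcal -ext_neg; apply: ole_omin2; first exact: lower.
  rewrite -(FAIcal_neg f); exact: lower.
rewrite /FAIcal -ext_neg.
have U1 := upper f; have U2 := upper (bf_add (bf_one _) f).
move: U1 U2; rewrite /omin !ominE.
case: (FAI (extend f)) => [a|]; case: (FAI (extend _)) => [b|];
case: (FAI f) => [c|]; case: (FAI (bf_add _ f)) => [d|] //=; lia.
Qed.
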